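(* Let $0\le\theta_1\le\theta_2\le\theta_3\le\theta_4<2\pi$ with $\theta_4-\theta_3\neq\theta_2-\theta_1$, and on $(\mathbb C^2)^{\otimes3}$ define $|\Phi_1\rangle=|000\rangle+e^{i\theta_1}|111\rangle$, $|\Phi_2\rangle=|001\rangle+e^{i\theta_2}|110\rangle$, $|\Phi_3\rangle=|010\rangle+e^{i\theta_3}|101\rangle$, $|\Phi_4\rangle=|011\rangle+e^{i\theta_4}|100\rangle$, and $|\Psi_k\rangle$ the same vectors with the plus signs replaced by minus signs ($k=1,\dots,4$). Then: (i) the orthogonal complement of $\mathrm{span}\{|\Phi_k\rangle\}$ equals $\mathrm{span}\{|\Psi_k\rangle\}$, and neither $\mathrm{span}\{|\Phi_k\rangle\}$ nor $\mathrm{span}\{|\Psi_k\rangle\}$ contains a nonzero fully product vector $|a\rangle|b\rangle|c\rangle$ (so both $\{|\Phi_k\rangle\}$ and $\{|\Psi_k\rangle\}$ are unextendible bases); (ii) the set $\{|\Phi_1\rangle,\dots,|\Phi_4\rangle\}$ (normalized) is perfectly distinguishable by LOCC among the three parties.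
   Context: A set $T$ of linearly independent pure states is an unextendible basis if the orthogonal complement of $\mathrm{span}(T)$ contains no nonzero fully product vector. ''Perfectly distinguishable by LOCC'': a finite-round protocol of local measurements with broadcast outcomes identifies the given state with probability 1. *)

(* Defs.v *)
From Stdlib Require Import Reals List.
Import ListNotations.
Open Scope R_scope.

Definition C : Type := (R * R)%type.
Definition C0 : C := (0, 0).
Definition C1 : C := (1, 0).
Definition RtoC (r : R) : C := (r, 0).
Definition Cadd (z w : C) : C := (fst z + fst w, snd z + snd w).
Definition Copp (z : C) : C := (- fst z, - snd z).
Definition Cmul (z w : C) : C :=
  (fst z * fst w - snd z * snd w, fst z * snd w + snd z * fst w).
Definition Cconj (z : C) : C := (fst z, - snd z).
Definition Cexpi (t : R) : C := (cos t, sin t).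
Definition Cnorm2 (z : C) : R := fst z * fst z + snd z * snd z.

Definition sumb (f : bool -> C) : C := Cadd (f false) (f true).
Fixpoint Csum (n : nat) (f : nat -> C) : C :=
  match n with O => C0 | S m => Cadd (Csum m f) (f m) end.

(** * Three-qubit vectors: (C^2)^{⊗3}, indexed by (x,y,z) with false=0, true=1 *)
Definition vec : Type := bool -> bool -> bool -> C.
Definition vec_eq (u v : vec) : Prop := forall x y z, u x y z = v x y z.
Definition vzero : vec := fun _ _ _ => C0.
Definition vadd (u v : vec) : vec := fun x y z => Cadd (u x y z) (v x y z).
Definition vscale (c : C) (v : vec) : vec := fun x y z => Cmul c (v x y z).
Definition inner (u v : vec) : C :=
  sumb (fun x => sumb (fun y => sumb (fun z => Cmul (Cconj (u x y z)) (v x y z)))).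
Definition vnorm2 (v : vec) : R :=
  Rplus (Rplus (Rplus (Cnorm2 (v false false false)) (Cnorm2 (v false false true)))
               (Rplus (Cnorm2 (v false true false)) (Cnorm2 (v false true true))))
        (Rplus (Rplus (Cnorm2 (v true false false)) (Cnorm2 (v true false true)))
               (Rplus (Cnorm2 (v true true false)) (Cnorm2 (v true true true)))).
Definition normalize (v : vec) : vec := vscale (RtoC (/ sqrt (vnorm2 v))) v.

Definition ket (a b c : bool) : vec :=
  fun x y z => if andb (andb (Bool.eqb x a) (Bool.eqb y b)) (Bool.eqb z c) then C1 else C0.

Definition pairvec (a b c : bool) (s : R) (t : R) : vec :=
  vadd (ket a b c) (vscale (Cmul (RtoC s) (Cexpi t)) (ket (negb a) (negb b) (negb c))).

(** Phi_{k+1} for k = 0,1,2,3 (paper's indices 1..4). *)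
Definition PhiS (t1 t2 t3 t4 : R) (k : nat) : vec :=
  match k with
  | 0%nat => pairvec false false false 1 t1
  | 1%nat => pairvec false false true 1 t2
  | 2%nat => pairvec false true false 1 t3
  | _ => pairvec false true true 1 t4
  end.
Definition PsiS (t1 t2 t3 t4 : R) (k : nat) : vec :=
  match k with
  | 0%nat => pairvec false false false (-1) t1
  | 1%nat => pairvec false false true (-1) t2
  | 2%nat => pairvec false true false (-1) t3
  | _ => pairvec false true true (-1) t4
  end.

Definition lincomb (f : nat -> vec) (n : nat) (c : nat -> C) : vec :=
  fun x y z => Csum n (fun k => Cmul (c k) (f k x y z)).
Definition in_span (f : nat -> vec) (n : nat) (v : vec) : Prop :=
  exists c : nat -> C, vec_eq v (lincomb f n c).
Definition orth_compl (f : nat -> vec) (n : nat) (v : vec) : Prop :=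
  forall w, in_span f n w -> inner w v = C0.
Definition lin_indep (f : nat -> vec) (n : nat) : Prop :=
  forall c : nat -> C, vec_eq (lincomb f n c) vzero -> forall k, (k < n)%nat -> c k = C0.
Definition is_product (v : vec) : Prop :=
  exists a b c : bool -> C, vec_eq v (fun x y z => Cmul (Cmul (a x) (b y)) (c z)).
Definition unextendible_basis (f : nat -> vec) (n : nat) : Prop :=
  lin_indep f n /\
  forall v, orth_compl f n v -> is_product v -> vec_eq v vzero.

Inductive party := PA | PB | PC.
(** a local operator on C^2, K i j = <i|K|j> *)
Definition M2 : Type := bool -> bool -> C.

Definition apply_local (p : party) (K : M2) (v : vec) : vec :=
  match p with
  | PA => fun x y z => sumb (fun x' => Cmul (K x x') (v x' y z))
  | PB => fun x y z => sumb (fun y' => Cmul (K y y') (v x y' z))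
  | PC => fun x y z => sumb (fun z' => Cmul (K z z') (v x y z'))
  end.

(** A protocol tree: at a node, party [who] measures with Kraus operators
    (one per outcome); the outcome is broadcast and determines the subtree.
    At a leaf, the parties announce a guess (an index). *)
Inductive protocol :=
| Leaf (guess : nat)
| Node (who : party) (branches : list (M2 * protocol)).

Definition complete (Ks : list M2) : Prop :=
  forall i j : bool,
    fold_right Cadd C0 (map (fun K => sumb (fun l => Cmul (Cconj (K l i)) (K l j))) Ks)
    = if Bool.eqb i j then C1 else C0.

Fixpoint valid (p : protocol) : Prop :=
  match p with
  | Leaf _ => True
  | Node _ bs =>
      complete (map fst bs) /\
      (fix vl (bs : list (M2 * protocol)) : Prop :=
         match bs with
         | [] => True
         | (_, q) :: r => valid q /\ vl r
         end) bs
  end.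

(** probability (Born rule, unnormalized input allowed) that the protocol
    run on state [v] ends at a leaf guessing [k] *)
Fixpoint succ_prob (p : protocol) (v : vec) (k : nat) : R :=
  match p with
  | Leaf g => if Nat.eqb g k then vnorm2 v else 0
  | Node w bs =>
      (fix s (bs : list (M2 * protocol)) : R :=
         match bs with
         | [] => 0
         | (K, q) :: r => succ_prob q (apply_local w K v) k + s r
         end) bs
  end.

Definition perfectly_distinguishable_LOCC (f : nat -> vec) (n : nat) : Prop :=
  exists p : protocol, valid p /\
    forall k, (k < n)%nat -> succ_prob p (normalize (f k)) k = 1.

(* Main.v *)
From Stdlib Require Import Reals Lra Lia Psatz Ring List.
Import ListNotations.
Require Import Defs.
Open Scope R_scope.

Definition Csub (a b : Defs.C) : Defs.C := Cadd a (Copp b).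

Lemma Ceq_intro (a b : Defs.C) : fst a = fst b -> snd a = snd b -> a = b.
Proof. destruct a, b; simpl; intros; subst; reflexivity. Qed.

Lemma C_ring : ring_theory C0 C1 Cadd Cmul Csub Copp (@eq Defs.C).
Proof.
  constructor; intros; apply Ceq_intro; unfold Cadd, Cmul, Csub, Copp, C0, C1; simpl; ring.
Qed.
Add Ring Cring : C_ring.

Lemma Cconj_mul a b : Cconj (Cmul a b) = Cmul (Cconj a) (Cconj b).
Proof. apply Ceq_intro; unfold Cconj, Cmul; simpl; ring. Qed.

Lemma Cnorm2_mul a b : Cnorm2 (Cmul a b) = Cnorm2 a * Cnorm2 b.
Proof. unfold Cnorm2, Cmul; simpl; ring. Qed.

Lemma Cnorm2_0 a : Cnorm2 a = 0 -> a = C0.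
Proof. destruct a as [x y]; unfold Cnorm2; simpl; intros.
  assert (x = 0) by nra. assert (y = 0) by nra. subst; reflexivity. Qed.

Lemma Cintegral a b : Cmul a b = C0 -> a = C0 \/ b = C0.
Proof. intros H. assert (Cnorm2 a * Cnorm2 b = 0) by (rewrite <- Cnorm2_mul, H; unfold Cnorm2, C0; simpl; ring).
  apply Rmult_integral in H0; destruct H0; [left|right]; apply Cnorm2_0; auto. Qed.

Lemma Csq0 a : Cmul a a = C0 -> a = C0.
Proof. intros H; destruct (Cintegral _ _ H); auto. Qed.

Lemma C10 : C1 <> C0.
Proof. unfold C1, C0; intro H; inversion H; lra. Qed.

Definition pv (a b c : bool) (f : Defs.C) : vec :=
  vadd (ket a b c) (vscale f (ket (negb a) (negb b) (negb c))).
Definition Gen (f0 f1 f2 f3 : Defs.C) (k : nat) : vec :=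
  match k with
  | 0%nat => pv false false false f0
  | 1%nat => pv false false true f1
  | 2%nat => pv false true false f2
  | _ => pv false true true f3
  end.

Definition char (f0 f1 f2 f3 : Defs.C) (v : vec) : Prop :=
  v true true true = Cmul f0 (v false false false) /\
  v true true false = Cmul f1 (v false false true) /\
  v true false true = Cmul f2 (v false true false) /\
  v true false false = Cmul f3 (v false true true).

Lemma span_char f0 f1 f2 f3 v :
  in_span (Gen f0 f1 f2 f3) 4 v <-> char f0 f1 f2 f3 v.
Proof.
  split.
  - intros [c H]. unfold vec_eq, lincomb in H. unfold char.
    rewrite !H. unfold Gen, pv, vadd, vscale, ket; cbn [Csum andb Bool.eqb negb].
    repeat split; ring.
  - intros (H0 & H1 & H2 & H3).
    exists (fun k => match k with 0%nat => v false false false | 1%nat => v false false true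
       | 2%nat => v false true false | _ => v false true true end).
    intros x y z; unfold lincomb.
    destruct x, y, z; unfold Gen, pv, vadd, vscale, ket; cbn [Csum andb Bool.eqb negb];
      try rewrite H0; try rewrite H1; try rewrite H2; try rewrite H3; ring.
Qed.

Lemma lin_indep_Gen f0 f1 f2 f3 : lin_indep (Gen f0 f1 f2 f3) 4.
Proof.
  intros c H k Hk. unfold vec_eq, lincomb, vzero in H.
  pose proof (H false false false) as E0. pose proof (H false false true) as E1.
  pose proof (H false true false) as E2. pose proof (H false true true) as E3.
  unfold Gen, pv, vadd, vscale, ket in E0, E1, E2, E3; cbn [Csum andb Bool.eqb negb] in E0, E1, E2, E3.
  destruct k as [|[|[|[|k]]]]; try lia.
  - rewrite <- E0; ring.
  - rewrite <- E1; ring.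
  - rewrite <- E2; ring.
  - rewrite <- E3; ring.
Qed.

Lemma char_product f0 f1 f2 f3 v :
  f0 <> C0 -> f1 <> C0 -> f2 <> C0 -> f3 <> C0 ->
  Cmul f0 f3 <> Cmul f1 f2 ->
  char f0 f1 f2 f3 v -> is_product v -> vec_eq v vzero.
Proof.
  intros n0 n1 n2 n3 nf (H0 & H1 & H2 & H3) [A [B [D Hp]]].
  unfold vec_eq in Hp.
  set (c0 := v false false false) in *. set (c1 := v false false true) in *.
  set (c2 := v false true false) in *. set (c3 := v false true true) in *.
  assert (P1 : Cmul c3 (Cmul f3 c3) = Cmul c0 (Cmul f0 c0)).
  { rewrite <- H0, <- H3. unfold c0, c3. rewrite !Hp. ring. }
  assert (P2 : Cmul c1 (Cmul f1 c1) = Cmul c0 (Cmul f0 c0)).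
  { rewrite <- H0, <- H1. unfold c0, c1. rewrite !Hp. ring. }
  assert (P3 : Cmul c2 (Cmul f2 c2) = Cmul c0 (Cmul f0 c0)).
  { rewrite <- H0, <- H2. unfold c0, c2. rewrite !Hp. ring. }
  assert (Q : Cmul c0 c3 = Cmul c1 c2).
  { unfold c0, c1, c2, c3. rewrite !Hp. ring. }
  assert (E : Cmul (Csub (Cmul f0 f3) (Cmul f1 f2)) (Cmul (Cmul c0 c3) (Cmul c0 c3)) = C0).
  { transitivity (Csub (Cmul (Cmul f0 f3) (Cmul (Cmul c0 c3) (Cmul c0 c3)))
                       (Cmul (Cmul f1 f2) (Cmul (Cmul c0 c3) (Cmul c0 c3))));[ring|].
    replace (Cmul (Cmul f1 f2) (Cmul (Cmul c0 c3) (Cmul c0 c3))) with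
      (Cmul (Cmul f1 f2) (Cmul (Cmul c1 c2) (Cmul c1 c2))) by (rewrite Q; reflexivity).
    transitivity (Csub (Cmul (Cmul c0 (Cmul f0 c0)) (Cmul c3 (Cmul f3 c3)))
                       (Cmul (Cmul c1 (Cmul f1 c1)) (Cmul c2 (Cmul f2 c2))));[ring|].
    rewrite P1, P2, P3. ring. }
  destruct (Cintegral _ _ E) as [E'|E'].
  { exfalso. apply nf. transitivity (Cadd (Csub (Cmul f0 f3) (Cmul f1 f2)) (Cmul f1 f2));[ring|].
    rewrite E'. ring. }
  apply Csq0 in E'.
  assert (S : Cmul (Cmul c0 (Cmul f0 c0)) (Cmul c0 (Cmul f0 c0)) = C0).
  { transitivity (Cmul (Cmul c0 (Cmul f0 c0)) (Cmul c3 (Cmul f3 c3)));[rewrite P1; reflexivity|].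
    transitivity (Cmul (Cmul f0 f3) (Cmul (Cmul c0 c3) (Cmul c0 c3)));[ring|].
    rewrite E'. ring. }
  apply Csq0 in S.
  assert (Z : forall f c, f <> C0 -> Cmul c (Cmul f c) = C0 -> c = C0).
  { intros f c nf' Hc. destruct (Cintegral _ _ Hc) as [|Hc']; auto.
    destruct (Cintegral _ _ Hc'); [contradiction|auto]. }
  assert (z0 : c0 = C0) by (apply (Z f0); auto).
  assert (z1 : c1 = C0) by (apply (Z f1); auto; rewrite P2; auto).
  assert (z2 : c2 = C0) by (apply (Z f2); auto; rewrite P3; auto).
  assert (z3 : c3 = C0) by (apply (Z f3); auto; rewrite P1; auto).
  intros x y z; unfold vzero. destruct x, y, z;
    try rewrite H0; try rewrite H1; try rewrite H2; try rewrite H3;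
    try fold c0; try fold c1; try fold c2; try fold c3;
    try rewrite z0; try rewrite z1; try rewrite z2; try rewrite z3; try ring.
Qed.

Ltac ceval := apply Ceq_intro; unfold inner, sumb, Gen, pv, vadd, vscale, ket, Cadd, Cmul, Cconj, C0, C1; simpl; ring.

Lemma inner_G0 f0 f1 f2 f3 v : inner (Gen f0 f1 f2 f3 0) v =
  Cadd (v false false false) (Cmul (Cconj f0) (v true true true)).
Proof. ceval. Qed.
Lemma inner_G1 f0 f1 f2 f3 v : inner (Gen f0 f1 f2 f3 1) v =
  Cadd (v false false true) (Cmul (Cconj f1) (v true true false)).
Proof. ceval. Qed.
Lemma inner_G2 f0 f1 f2 f3 v : inner (Gen f0 f1 f2 f3 2) v =
  Cadd (v false true false) (Cmul (Cconj f2) (v true false true)).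
Proof. ceval. Qed.
Lemma inner_G3 f0 f1 f2 f3 v : inner (Gen f0 f1 f2 f3 3) v =
  Cadd (v false true true) (Cmul (Cconj f3) (v true false false)).
Proof. ceval. Qed.

Lemma solve_lem f a b : Cmul (Cconj f) f = C1 -> Cadd a (Cmul (Cconj f) b) = C0 ->
  b = Cmul (Copp f) a.
Proof.
  intros H1 H2.
  transitivity (Cmul (Cmul (Cconj f) f) b); [rewrite H1; ring|].
  transitivity (Cmul (Copp f) (Csub a (Cadd a (Cmul (Cconj f) b)))); [ring|].
  rewrite H2; ring.
Qed.

Lemma Gen_in_span f0 f1 f2 f3 k : in_span (Gen f0 f1 f2 f3) 4 (Gen f0 f1 f2 f3 k).
Proof.
  apply span_char. unfold char.
  destruct k as [|[|[|[|k]]]]; unfold Gen, pv, vadd, vscale, ket; cbn [andb Bool.eqb negb];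
  repeat split; ring.
Qed.

Lemma orth_to_char h0 h1 h2 h3 v :
  Cmul (Cconj h0) h0 = C1 -> Cmul (Cconj h1) h1 = C1 ->
  Cmul (Cconj h2) h2 = C1 -> Cmul (Cconj h3) h3 = C1 ->
  orth_compl (Gen h0 h1 h2 h3) 4 v -> char (Copp h0) (Copp h1) (Copp h2) (Copp h3) v.
Proof.
  intros u0 u1 u2 u3 H.
  pose proof (H _ (Gen_in_span h0 h1 h2 h3 0)) as E0.
  pose proof (H _ (Gen_in_span h0 h1 h2 h3 1)) as E1.
  pose proof (H _ (Gen_in_span h0 h1 h2 h3 2)) as E2.
  pose proof (H _ (Gen_in_span h0 h1 h2 h3 3)) as E3.
  rewrite inner_G0 in E0. rewrite inner_G1 in E1. rewrite inner_G2 in E2. rewrite inner_G3 in E3.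
  unfold char; repeat split; apply solve_lem; auto.
Qed.

Lemma char_to_orth h0 h1 h2 h3 v :
  Cmul (Cconj h0) h0 = C1 -> Cmul (Cconj h1) h1 = C1 ->
  Cmul (Cconj h2) h2 = C1 -> Cmul (Cconj h3) h3 = C1 ->
  char (Copp h0) (Copp h1) (Copp h2) (Copp h3) v -> orth_compl (Gen h0 h1 h2 h3) 4 v.
Proof.
  intros u0 u1 u2 u3 (V0 & V1 & V2 & V3) w Hw.
  apply span_char in Hw. destruct Hw as (W0 & W1 & W2 & W3).
  unfold inner, sumb.
  rewrite V0, V1, V2, V3, W0, W1, W2, W3, !Cconj_mul.
  transitivity (Cadd (Cadd (Cadd
    (Cmul (Cmul (Cconj (w false false false)) (v false false false)) (Csub C1 (Cmul (Cconj h0) h0)))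
    (Cmul (Cmul (Cconj (w false false true)) (v false false true)) (Csub C1 (Cmul (Cconj h1) h1))))
    (Cmul (Cmul (Cconj (w false true false)) (v false true false)) (Csub C1 (Cmul (Cconj h2) h2))))
    (Cmul (Cmul (Cconj (w false true true)) (v false true true)) (Csub C1 (Cmul (Cconj h3) h3))));
  [ring|].
  rewrite u0, u1, u2, u3; ring.
Qed.

Definition P0 : M2 := fun i j => if i then C0 else if j then C0 else C1.
Definition P1 : M2 := fun i j => if i then (if j then C1 else C0) else C0.
Definition nodeC (a b : nat) := Node PC [(P0, Leaf a); (P1, Leaf b)].
Definition proto : protocol :=
  Node PA [(P0, Node PB [(P0, nodeC 0 1); (P1, nodeC 2 3)]);
           (P1, Node PB [(P0, nodeC 3 2); (P1, nodeC 1 0)])].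

Lemma complete01 : complete [P0; P1].
Proof. intros i j; destruct i, j; apply Ceq_intro; unfold P0, P1, sumb, Cadd, Cmul, Cconj, C0, C1; simpl; ring. Qed.

Lemma proto_valid : valid proto.
Proof. simpl. repeat split; apply complete01. Qed.

Ltac sp := unfold proto, nodeC; simpl succ_prob; unfold apply_local, vnorm2, sumb, P0, P1, Cnorm2, Cadd, Cmul, C0, C1; simpl; ring.

Lemma sp0 v : succ_prob proto v 0 = Cnorm2 (v false false false) + Cnorm2 (v true true true).
Proof. sp. Qed.
Lemma sp1 v : succ_prob proto v 1 = Cnorm2 (v false false true) + Cnorm2 (v true true false).
Proof. sp. Qed.
Lemma sp2 v : succ_prob proto v 2 = Cnorm2 (v false true false) + Cnorm2 (v true false true).
Proof. sp. Qed.
Lemma sp3 v : succ_prob proto v 3 = Cnorm2 (v false true true) + Cnorm2 (v true false false).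
Proof. sp. Qed.

Lemma Cnorm2_RtoC r z : Cnorm2 (Cmul (RtoC r) z) = r * r * Cnorm2 z.
Proof. unfold Cnorm2, Cmul, RtoC; simpl; ring. Qed.

Lemma Cnorm2_nonneg z : 0 <= Cnorm2 z.
Proof. unfold Cnorm2; nra. Qed.

Lemma norm_lemma v a b c a' b' c' :
  Cnorm2 (v a b c) + Cnorm2 (v a' b' c') = vnorm2 v -> 0 < vnorm2 v ->
  Cnorm2 (normalize v a b c) + Cnorm2 (normalize v a' b' c') = 1.
Proof.
  intros H Hp. unfold normalize, vscale. rewrite !Cnorm2_RtoC.
  rewrite <- Rmult_plus_distr_l, H.
  pose proof (sqrt_lt_R0 _ Hp). pose proof (sqrt_sqrt (vnorm2 v) (Rlt_le _ _ Hp)).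
  rewrite <- H1 at 3. field. lra.
Qed.

Ltac vn := unfold Gen, pv, vadd, vscale, ket, vnorm2, Cnorm2, Cadd, Cmul, C0, C1; simpl.

Lemma Gen_norm f0 f1 f2 f3 k : (k < 4)%nat ->
  succ_prob proto (normalize (Gen f0 f1 f2 f3 k)) k = 1.
Proof.
  intros Hk. destruct k as [|[|[|[|k]]]]; try lia.
  - rewrite sp0. apply norm_lemma.
    + vn; ring.
    + assert (vnorm2 (Gen f0 f1 f2 f3 0) = 1 + Cnorm2 f0) by (vn; unfold Cnorm2; ring).
      pose proof (Cnorm2_nonneg f0); lra.
  - rewrite sp1. apply norm_lemma.
    + vn; ring.
    + assert (vnorm2 (Gen f0 f1 f2 f3 1) = 1 + Cnorm2 f1) by (vn; unfold Cnorm2; ring).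
      pose proof (Cnorm2_nonneg f1); lra.
  - rewrite sp2. apply norm_lemma.
    + vn; ring.
    + assert (vnorm2 (Gen f0 f1 f2 f3 2) = 1 + Cnorm2 f2) by (vn; unfold Cnorm2; ring).
      pose proof (Cnorm2_nonneg f2); lra.
  - rewrite sp3. apply norm_lemma.
    + vn; ring.
    + assert (vnorm2 (Gen f0 f1 f2 f3 3) = 1 + Cnorm2 f3) by (vn; unfold Cnorm2; ring).
      pose proof (Cnorm2_nonneg f3); lra.
Qed.

Lemma Gen_LOCC f0 f1 f2 f3 : perfectly_distinguishable_LOCC (Gen f0 f1 f2 f3) 4.
Proof. exists proto. split; [apply proto_valid|]. intros; apply Gen_norm; auto. Qed.

Lemma RtoC1 : RtoC 1 = C1. Proof. reflexivity. Qed.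
Lemma RtoCm1 : RtoC (-1) = Copp C1.
Proof. apply Ceq_intro; unfold RtoC, Copp, C1; simpl; ring. Qed.
Lemma Cconj_C1 : Cconj C1 = C1. Proof. apply Ceq_intro; unfold Cconj, C1; simpl; ring. Qed.
Lemma Cconj_opp a : Cconj (Copp a) = Copp (Cconj a).
Proof. apply Ceq_intro; unfold Cconj, Copp; simpl; ring. Qed.

Lemma Cexpi_unit t : Cmul (Cconj (Cexpi t)) (Cexpi t) = C1.
Proof. pose proof (sin2_cos2 t). unfold Rsqr in H.
  apply Ceq_intro; unfold Cmul, Cconj, Cexpi, C1; simpl; lra. Qed.

Lemma Cexpi_add a b : Cmul (Cexpi a) (Cexpi b) = Cexpi (a + b).
Proof. apply Ceq_intro; unfold Cmul, Cexpi; simpl; rewrite ?cos_plus, ?sin_plus; ring. Qed.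

Definition fp t := Cmul (RtoC 1) (Cexpi t).
Definition fm t := Cmul (RtoC (-1)) (Cexpi t).

Lemma fp_unit t : Cmul (Cconj (fp t)) (fp t) = C1.
Proof. unfold fp. rewrite RtoC1, Cconj_mul, Cconj_C1.
  transitivity (Cmul (Cmul (Cconj (Cexpi t)) (Cexpi t)) C1); [ring|]. rewrite Cexpi_unit; ring. Qed.
Lemma fm_eq t : fm t = Copp (fp t).
Proof. unfold fm, fp. rewrite RtoC1, RtoCm1. ring. Qed.
Lemma fm_unit t : Cmul (Cconj (fm t)) (fm t) = C1.
Proof. rewrite fm_eq, Cconj_opp. transitivity (Cmul (Cconj (fp t)) (fp t)); [ring|]. apply fp_unit. Qed.

Lemma unit_nz f : Cmul (Cconj f) f = C1 -> f <> C0.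
Proof. intros H E. subst. apply C10. rewrite <- H. ring. Qed.

Lemma cos_not1 d : -(2*PI) < d < 2*PI -> d <> 0 -> cos d <> 1.
Proof.
  intros Hd Hn Hc.
  assert (K : forall x, 0 < x < 2*PI -> cos x <> 1).
  { intros x Hx Hcx. replace x with (2 * (x/2)) in Hcx by field.
    rewrite cos_2a_sin in Hcx. assert (0 < sin (x/2)) by (apply sin_gt_0; lra).
    nra. }
  destruct (Rlt_or_le 0 d).
  - apply (K d); auto; lra.
  - apply (K (-d)); [lra|]. rewrite cos_neg; auto.
Qed.

Lemma fp_cond t1 t2 t3 t4 :
  0 <= t1 -> t1 <= t2 -> t2 <= t3 -> t3 <= t4 -> t4 < 2 * PI ->
  t4 - t3 <> t2 - t1 ->
  Cmul (fp t1) (fp t4) <> Cmul (fp t2) (fp t3).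
Proof.
  intros h1 h2 h3 h4 h5 h6 E. unfold fp in E. rewrite RtoC1 in E.
  assert (E2 : Cexpi (t1 + t4) = Cexpi (t2 + t3)).
  { rewrite <- !Cexpi_add. transitivity (Cmul C1 (Cmul (Cmul C1 (Cexpi t1)) (Cmul C1 (Cexpi t4)))); [ring|].
    rewrite E. ring. }
  assert (E3 : Cexpi (t1 + t4 - (t2 + t3)) = C1).
  { unfold Rminus. rewrite <- Cexpi_add, E2, Cexpi_add.
    replace (t2 + t3 + - (t2 + t3)) with 0 by ring.
    apply Ceq_intro; unfold Cexpi, C1; simpl; [apply cos_0|apply sin_0]. }
  assert (cos (t1 + t4 - (t2 + t3)) = 1) by (change (fst (Cexpi (t1 + t4 - (t2 + t3))) = 1); rewrite E3; reflexivity).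
  revert H. apply cos_not1; lra.
Qed.

Lemma char_fm_fp t1 t2 t3 t4 v :
  char (Copp (fp t1)) (Copp (fp t2)) (Copp (fp t3)) (Copp (fp t4)) v <->
  char (fm t1) (fm t2) (fm t3) (fm t4) v.
Proof. rewrite !fm_eq. tauto. Qed.

Lemma char_fp_fm t1 t2 t3 t4 v :
  char (Copp (fm t1)) (Copp (fm t2)) (Copp (fm t3)) (Copp (fm t4)) v <->
  char (fp t1) (fp t2) (fp t3) (fp t4) v.
Proof. rewrite !fm_eq. replace (Copp (Copp (fp t1))) with (fp t1) by ring.
  replace (Copp (Copp (fp t2))) with (fp t2) by ring.
  replace (Copp (Copp (fp t3))) with (fp t3) by ring.
  replace (Copp (Copp (fp t4))) with (fp t4) by ring. tauto. Qed.

Theorem mainTheorem10 (t1 t2 t3 t4 : R) :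
  0 <= t1 -> t1 <= t2 -> t2 <= t3 -> t3 <= t4 -> t4 < 2 * PI ->
  t4 - t3 <> t2 - t1 ->
  ((forall v : vec, orth_compl (PhiS t1 t2 t3 t4) 4 v <-> in_span (PsiS t1 t2 t3 t4) 4 v) /\
   (forall v : vec, in_span (PhiS t1 t2 t3 t4) 4 v -> is_product v -> vec_eq v vzero) /\
   (forall v : vec, in_span (PsiS t1 t2 t3 t4) 4 v -> is_product v -> vec_eq v vzero) /\
   unextendible_basis (PhiS t1 t2 t3 t4) 4 /\
   unextendible_basis (PsiS t1 t2 t3 t4) 4) /\
  perfectly_distinguishable_LOCC (PhiS t1 t2 t3 t4) 4.
Proof.
  intros h1 h2 h3 h4 h5 h6.
  change (PhiS t1 t2 t3 t4) with (Gen (fp t1) (fp t2) (fp t3) (fp t4)).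
  change (PsiS t1 t2 t3 t4) with (Gen (fm t1) (fm t2) (fm t3) (fm t4)).
  pose proof (fp_cond t1 t2 t3 t4 h1 h2 h3 h4 h5 h6) as cond.
  assert (cond' : Cmul (fm t1) (fm t4) <> Cmul (fm t2) (fm t3)).
  { rewrite !fm_eq. intro E; apply cond.
    transitivity (Cmul (Copp (fp t1)) (Copp (fp t4))); [ring|]. rewrite E; ring. }
  assert (PhiP : forall v, in_span (Gen (fp t1) (fp t2) (fp t3) (fp t4)) 4 v -> is_product v -> vec_eq v vzero).
  { intros v Hs. rewrite span_char in Hs. apply (char_product (fp t1) (fp t2) (fp t3) (fp t4)); auto; apply unit_nz, fp_unit. }
  assert (PsiP : forall v, in_span (Gen (fm t1) (fm t2) (fm t3) (fm t4)) 4 v -> is_product v -> vec_eq v vzero).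
  { intros v Hs. rewrite span_char in Hs. apply (char_product (fm t1) (fm t2) (fm t3) (fm t4)); auto; apply unit_nz, fm_unit. }
  assert (O1 : forall v, orth_compl (Gen (fp t1) (fp t2) (fp t3) (fp t4)) 4 v <->
                         in_span (Gen (fm t1) (fm t2) (fm t3) (fm t4)) 4 v).
  { intro v. rewrite span_char, <- char_fm_fp. split.
    - apply orth_to_char; apply fp_unit.
    - apply char_to_orth; apply fp_unit. }
  assert (O2 : forall v, orth_compl (Gen (fm t1) (fm t2) (fm t3) (fm t4)) 4 v ->
                         in_span (Gen (fp t1) (fp t2) (fp t3) (fp t4)) 4 v).
  { intros v H. rewrite span_char, <- char_fp_fm. revert H. apply orth_to_char; apply fm_unit. }
  split; [|apply Gen_LOCC].
  split; [exact O1|]. split; [exact PhiP|]. split; [exact PsiP|]. split.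
  - split; [apply lin_indep_Gen|]. intros v Ho. apply PsiP, O1, Ho.
  - split; [apply lin_indep_Gen|]. intros v Ho. apply PhiP, O2, Ho.
Qed.
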